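(* Let $\rho$ be a two-qubit state on $\mathbb{C}^2\otimes\mathbb{C}^2$ whose correlation matrix $T$ is diagonal. If $d_{\max}(\rho)>1/\sqrt2$, then $M(\rho)>1$. The converse does not hold: there exist two-qubit states $\rho$ with diagonal correlation matrix such that $M(\rho)>1$ but $d_{\max}(\rho)\leq 1/\sqrt2$.
   Context: Let $\sigma_0,\sigma_1,\sigma_2$ be the Pauli matrices $X,Y,Z$. Every two-qubit state can be written as $\rho=\frac14\big(I\otimes I+\sum_i r^A_i\sigma_i\otimes I+\sum_j r^B_j I\otimes\sigma_j+\sum_{i,j}T_{ij}\sigma_i\otimes\sigma_j\big)$, with $r^A_i=\mathrm{Tr}(\sigma_i\rho_A)$, $r^B_j=\mathrm{Tr}(\sigma_j\rho_B)$ and real correlation matrix $T_{ij}=\mathrm{Tr}((\sigma_i\otimes\sigma_j)\rho)$. Define $M(\rho)=\tau_1+\tau_2$, the sum of the two largest eigenvalues of $T^TT$. A unitary $U^B$ on $\mathbb{C}^2$ is called cyclic for $\rho$ if $[\rho_B,U^B]=0$, where $\rho_B=\mathrm{Tr}_A\rho$. Set $\rho_f=(I\otimes U^B)\rho(I\otimes U^{B\dagger})$, define $d(\rho,U^B)=\frac{1}{\sqrt2}\|\rho-\rho_f\|_F$ (Frobenius norm), and $d_{\max}(\rho)=\max\{d(\rho,U^B): U^B\text{ unitary},\ [\rho_B,U^B]=0\}$. *)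

(* Defs.v *)
From HB Require Import structures.
From mathcomp Require Import all_boot all_order all_algebra.
From mathcomp Require Import complex mxtens.
From mathcomp Require Import boolp classical_sets reals.
Set Implicit Arguments. Unset Strict Implicit. Unset Printing Implicit Defensive.
Import Order.TTheory GRing.Theory Num.Theory.
Local Open Scope ring_scope.
Local Open Scope classical_set_scope.

Section TwoQubit.
Variable R : realType.
Local Notation C := (R[i]).

Definition adj m n (A : 'M[C]_(m, n)) : 'M[C]_(n, m) := \matrix_(i, j) (A j i)^*.

Definition pauliX : 'M[C]_2 := \matrix_(a, b) (if a == b then 0 else 1).
Definition pauliY : 'M[C]_2 :=
  \matrix_(a, b) (if a == b then 0 else if a == 0 then - 'i else 'i).
Definition pauliZ : 'M[C]_2 :=
  \matrix_(a, b) (if a == b then (if a == 0 then 1 else -1) else 0).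
Definition pauli (i : 'I_3) : 'M[C]_2 :=
  match val i with 0 => pauliX | 1 => pauliY | _ => pauliZ end.

Definition is_state (rho : 'M[C]_(2 * 2)) : Prop :=
  [/\ adj rho = rho,
      (forall v : 'cV[C]_(2 * 2), 0 <= (adj v *m rho *m v) 0 0)
    & \tr rho = 1].

(* reduced state rho_B = Tr_A rho  (first tensor factor is A) *)
Definition ptraceA (rho : 'M[C]_(2 * 2)) : 'M[C]_2 :=
  \matrix_(j, k) \sum_(a < 2) rho (mxtens_index (a, j)) (mxtens_index (a, k)).

(* correlation matrix T_ij = Tr((sigma_i (x) sigma_j) rho), which is real for
   Hermitian rho; we take its real part to view it in R. *)
Definition corr (rho : 'M[C]_(2 * 2)) : 'M[R]_3 :=
  \matrix_(i, j) complex.Re (\tr ((pauli i *t pauli j) *m rho)).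

(* M(rho) = tau_1 + tau_2, the sum of the two largest eigenvalues
   (with multiplicity) of T^T T *)
Definition sorted_spectrum (A : 'M[R]_3) (s : seq R) : Prop :=
  [/\ size s = 3, sorted >=%R s & char_poly A = \prod_(x <- s) ('X - x%:P)].
Definition Mval (rho : 'M[C]_(2 * 2)) : R :=
  xget 0 [set m | exists s, sorted_spectrum ((corr rho)^T *m corr rho) s
                            /\ m = s`_0 + s`_1].

Definition unitary (U : 'M[C]_2) : Prop := adj U *m U = 1%:M.

Definition cyclic (rho : 'M[C]_(2 * 2)) (U : 'M[C]_2) : Prop :=
  unitary U /\ ptraceA rho *m U = U *m ptraceA rho.

Definition rho_f (rho : 'M[C]_(2 * 2)) (U : 'M[C]_2) : 'M[C]_(2 * 2) :=
  (1%:M *t U) *m rho *m adj (1%:M *t U).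

Definition frob m n (A : 'M[C]_(m, n)) : R :=
  Num.sqrt (\sum_i \sum_j complex.Re (A i j * (A i j)^*)).

Definition dist (rho : 'M[C]_(2 * 2)) (U : 'M[C]_2) : R :=
  (Num.sqrt 2)^-1 * frob (rho - rho_f rho U).

(* d_max(rho) = max over cyclic unitaries (attained; we use the supremum) *)
Definition dmax (rho : 'M[C]_(2 * 2)) : R :=
  sup [set dist rho U | U in [set U | cyclic rho U]].

End TwoQubit.

(* Main.v *)
Require Import Defs.
From HB Require Import structures.
From mathcomp Require Import all_boot all_order all_algebra.
From mathcomp Require Import complex mxtens.
From mathcomp Require Import boolp classical_sets reals.
From mathcomp Require Import ring lra.
Set Implicit Arguments. Unset Strict Implicit. Unset Printing Implicit Defensive.
Import Order.TTheory GRing.Theory Num.Theory.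
Local Open Scope ring_scope.

Local Open Scope classical_set_scope.
Local Close Scope classical_set_scope.

Section Gen.
Variable R : realType.
Local Notation C := (R[i]).

Lemma sum_tens (V : nmodType) m n (F : 'I_(m * n) -> V) :
  \sum_k F k = \sum_(i < m) \sum_(j < n) F (mxtens_index (i, j)).
Proof.
rewrite pair_big /= (reindex (@mxtens_index m n)) /=; last first.
  by exists (@mxtens_unindex m n) => x _; rewrite (mxtens_indexK, mxtens_unindexK).
by apply: eq_bigr => -[].
Qed.

Definition fs m n (X : 'M[C]_(m, n)) : R :=
  \sum_i \sum_j complex.Re (X i j * (X i j)^*).

Lemma frobE m n (X : 'M[C]_(m, n)) : frob X = Num.sqrt (fs X).
Proof. by []. Qed.

Lemma adjK m n (A : 'M[C]_(m, n)) : adj (adj A) = A.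
Proof. by apply/matrixP => i j; rewrite !mxE conjCK. Qed.

Lemma adj_mul m n p (A : 'M[C]_(m, n)) (B : 'M[C]_(n, p)) :
  adj (A *m B) = adj B *m adj A.
Proof.
apply/matrixP => i j; rewrite !mxE rmorph_sum; apply: eq_bigr => k _.
by rewrite !mxE rmorphM mulrC.
Qed.

Lemma adjD m n (A B : 'M[C]_(m, n)) : adj (A + B) = adj A + adj B.
Proof. by apply/matrixP => i j; rewrite !mxE rmorphD. Qed.

Lemma adjN m n (A : 'M[C]_(m, n)) : adj (- A) = - adj A.
Proof. by apply/matrixP => i j; rewrite !mxE rmorphN. Qed.

Lemma adjB m n (A B : 'M[C]_(m, n)) : adj (A - B) = adj A - adj B.
Proof. by rewrite adjD adjN. Qed.

Lemma adj1 n : adj (1%:M : 'M[C]_n) = 1%:M.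
Proof. by apply/matrixP => i j; rewrite !mxE eq_sym rmorph_nat. Qed.

Lemma tr_adj n (A : 'M[C]_n) : \tr (adj A) = (\tr A)^*.
Proof. by rewrite /mxtrace rmorph_sum; apply: eq_bigr => i _; rewrite mxE. Qed.

Lemma ReJ (z : C) : complex.Re z^* = complex.Re z.
Proof. by case: z. Qed.

Lemma Re_sum I (r : seq I) (P : pred I) (F : I -> C) :
  complex.Re (\sum_(i <- r | P i) F i) = \sum_(i <- r | P i) complex.Re (F i).
Proof.
elim/big_rec2: _ => [|i x y _ <-]; first by [].
by case: (F i) => a b; case: y => c d.
Qed.

Lemma fs_tr m n (X : 'M[C]_(m, n)) : fs X = complex.Re (\tr (X *m adj X)).
Proof.
rewrite /fs /mxtrace Re_sum; apply: eq_bigr => i _.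
by rewrite mxE Re_sum; apply: eq_bigr => j _; rewrite mxE.
Qed.

Lemma fs_adj m n (X : 'M[C]_(m, n)) : fs (adj X) = fs X.
Proof. by rewrite !fs_tr adjK mxtrace_mulC. Qed.

Lemma fs_conj n (U X : 'M[C]_n) : adj U *m U = 1%:M ->
  fs (X - U *m X *m adj U) =
  2 * fs X - 2 * complex.Re (\tr (X *m U *m adj X *m adj U)).
Proof.
move=> hU.
rewrite !fs_tr adjB !adj_mul adjK mulmxBl !mulmxBr !raddfD /= !raddfN /=.
have e1 : \tr (U *m X *m adj U *m (U *m (adj X *m adj U))) = \tr (X *m adj X).
  have -> : U *m X *m adj U *m (U *m (adj X *m adj U)) = U *m (X *m adj X) *m adj U.
    by rewrite -!mulmxA [adj U *m (U *m _)]mulmxA hU mul1mx.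
  by rewrite mxtrace_mulC [adj U *m (U *m _)]mulmxA hU mul1mx.
have e2 : complex.Re (\tr (U *m X *m adj U *m adj X))
        = complex.Re (\tr (X *m U *m adj X *m adj U)).
  rewrite -ReJ -tr_adj !adj_mul !adjK mxtrace_mulC !mulmxA.
  by rewrite mxtrace_mulC !mulmxA.
rewrite e1 !mulmxA.
rewrite e2.
ring.
Qed.

Definition blk (rho : 'M[C]_(2 * 2)) (a b : 'I_2) : 'M[C]_2 :=
  \matrix_(j, k) rho (mxtens_index (a, j)) (mxtens_index (b, k)).

Lemma fs_blk rho : fs rho = \sum_a \sum_b fs (blk rho a b).
Proof.
rewrite /fs sum_tens; apply: eq_bigr => a _.
under eq_bigr => j _ do rewrite sum_tens.
rewrite exchange_big; apply: eq_bigr => b _; apply: eq_bigr => j _.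
by apply: eq_bigr => k _; rewrite mxE.
Qed.

Lemma blkB (X Y : 'M[C]_(2 * 2)) a b : blk (X - Y) a b = blk X a b - blk Y a b.
Proof. by apply/matrixP => j k; rewrite !mxE. Qed.

Lemma tens1_mul (U : 'M[C]_2) (M : 'M[C]_(2 * 2)) a j l :
  ((1%:M *t U) *m M) (mxtens_index (a, j)) l
  = \sum_j' U j j' * M (mxtens_index (a, j')) l.
Proof.
rewrite mxE sum_tens (bigD1 a) //= [X in _ + X]big1 ?addr0.
  by apply: eq_bigr => j' _; rewrite tensmxE mxE eqxx mulr1n mul1r.
move=> a' ha'; apply: big1 => j' _.
by rewrite tensmxE mxE eq_sym (negbTE ha') mulr0n !mul0r.
Qed.

Lemma mul_tens1 (V : 'M[C]_2) (M : 'M[C]_(2 * 2)) b k l :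
  (M *m (1%:M *t V)) l (mxtens_index (b, k))
  = \sum_k' M l (mxtens_index (b, k')) * V k' k.
Proof.
rewrite mxE sum_tens (bigD1 b) //= [X in _ + X]big1 ?addr0.
  by apply: eq_bigr => k' _; rewrite tensmxE mxE eqxx mulr1n mul1r.
move=> b' hb'; apply: big1 => k' _.
by rewrite tensmxE mxE (negbTE hb') mulr0n mul0r mulr0.
Qed.

Lemma adj_tens1 (U : 'M[C]_2) : adj (1%:M *t U) = (1%:M *t adj U) :> 'M[C]_(2 * 2).
Proof.
apply/matrixP => i j.
case: (mxtens_indexP i) => a k; case: (mxtens_indexP j) => b l.
by rewrite mxE !tensmxE !mxE rmorphM /= rmorphMn rmorph1 eq_sym.
Qed.

Lemma blk_rho_f rho U a b : blk (rho_f rho U) a b = U *m blk rho a b *m adj U.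
Proof.
apply/matrixP => j k; rewrite [LHS]mxE /rho_f adj_tens1 mul_tens1 mxE.
apply: eq_bigr => k' _; rewrite tens1_mul mxE; congr (_ * _).
by rewrite mxE; apply: eq_bigr => j' _; rewrite mxE.
Qed.

Lemma tr_tens (A B : 'M[C]_2) rho :
  \tr ((A *t B) *m rho) = \sum_a \sum_b A a b * \tr (B *m blk rho b a).
Proof.
rewrite /mxtrace sum_tens; apply: eq_bigr => a _.
under eq_bigr => j _ do rewrite mxE sum_tens.
rewrite exchange_big; apply: eq_bigr => b _.
rewrite mulr_sumr; apply: eq_bigr => j _.
rewrite mxE mulr_sumr; apply: eq_bigr => k _.
by rewrite tensmxE !mxE mulrA.
Qed.

Lemma lift00 : lift (ord0 : 'I_2) (ord0 : 'I_1) = (ord_max : 'I_2).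
Proof. by apply: val_inj. Qed.

Lemma ptraceA_blk rho : ptraceA rho = blk rho ord0 ord0 + blk rho ord_max ord_max.
Proof.
apply/matrixP => j k.
by rewrite !mxE big_ord_recl big_ord_recl big_ord0 addr0 lift00.
Qed.

Lemma blk_herm rho a b : adj rho = rho -> blk rho b a = adj (blk rho a b).
Proof.
move=> H; apply/matrixP => j k; rewrite !mxE.
by rewrite -{1}H mxE.
Qed.

End Gen.

Section S.
Variable R : realType.
Local Notation C := (R[i]).
Definition wP (P U : 'M[C]_2) : R := 2 - complex.Re (\tr (P *m U *m P *m adj U)).
Definition rc (x : R) : C := (x +i* 0)%C.

Ltac ex2 := rewrite /wP /fs /mxtrace ?(mxE, big_ord_recl, big_ord0) /=.
Ltac genU U := move: (U ord0 ord0) (U ord0 (lift ord0 ord0)) (U (lift ord0 ord0) ord0) (U (lift ord0 ord0) (lift ord0 ord0)) => [p1 p2] [q1 q2] [r1 r2] [s1 s2] /=.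

Lemma fsN_id (U : 'M[C]_2) (a g : R) :
  let N := rc a *: pauliX R + rc g *: ('i *: pauliY R) in
  2 * fs N - 2 * complex.Re (\tr (N *m U *m adj N *m adj U))
  = 2 * a ^+ 2 * wP (pauliX R) U + 2 * g ^+ 2 * wP (pauliY R) U.
Proof.
move=> N; rewrite /N; ex2. genU U. ring.
Qed.
Lemma fs_scale m n (k : R) (M : 'M[C]_(m, n)) : fs (rc k *: M) = k ^+ 2 * fs M.
Proof.
rewrite /fs mulr_sumr; apply: eq_bigr => i _; rewrite mulr_sumr.
by apply: eq_bigr => j _; rewrite !mxE; case: (M i j) => x y /=; ring.
Qed.

Lemma fs_dbl m n (M : 'M[C]_(m, n)) : fs (M + M) = 4 * fs M.
Proof.
rewrite /fs mulr_sumr; apply: eq_bigr => i _; rewrite mulr_sumr.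
by apply: eq_bigr => j _; rewrite !mxE; case: (M i j) => x y /=; ring.
Qed.

Lemma fs_opp m n (M : 'M[C]_(m, n)) : fs (- M) = fs M.
Proof.
rewrite /fs; apply: eq_bigr => i _.
by apply: eq_bigr => j _; rewrite !mxE; case: (M i j) => x y /=; ring.
Qed.

Lemma fsZ : fs (pauliZ R) = 2 /\ adj (pauliZ R) = pauliZ R.
Proof.
split; first by rewrite /fs ?(mxE, big_ord_recl, big_ord0) /=; ring.
apply/matrixP => i j; rewrite !mxE.
case: i => [[|[|i]] hi]; case: j => [[|[|j]] hj] //=; by rewrite ?rmorph1 ?rmorph0 ?rmorphN1.
Qed.

Lemma fsZW (U : 'M[C]_2) : adj U *m U = 1%:M ->
  fs (pauliZ R - U *m pauliZ R *m adj U) = 2 * wP (pauliZ R) U.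
Proof.
move=> hU; rewrite fs_conj //; case: fsZ => -> ->; rewrite /wP; ring.
Qed.

Lemma fsNW (U : 'M[C]_2) (a g : R) : adj U *m U = 1%:M ->
  let N := rc a *: pauliX R + rc g *: ('i *: pauliY R) in
  fs (N - U *m N *m adj U) = 2 * a ^+ 2 * wP (pauliX R) U + 2 * g ^+ 2 * wP (pauliY R) U.
Proof. by move=> hU N; rewrite fs_conj // fsN_id. Qed.

End S.

Section S3.
Variable R : realType.
Local Notation C := (R[i]).
Lemma zmod_rearr (V : zmodType) (a x d y : V) : (a - x) - (d - y) = (a - d) - (x - y).
Proof. by rewrite !opprB addrACA [in RHS]addrACA [- d + _]addrC. Qed.

Lemma core (U A B D : 'M[C]_2) (g b : C) (c a gm : R) :
  adj U *m U = 1%:M -> (A + D) *m U = U *m (A + D) ->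
  A - D = g%:M + rc c *: pauliZ R ->
  B = b%:M + (rc a *: pauliX R + rc gm *: ('i *: pauliY R)) ->
  fs (A - U *m A *m adj U) + fs (B - U *m B *m adj U)
  + fs (adj B - U *m adj B *m adj U) + fs (D - U *m D *m adj U)
  = c ^+ 2 * wP (pauliZ R) U + 4 * a ^+ 2 * wP (pauliX R) U
    + 4 * gm ^+ 2 * wP (pauliY R) U.
Proof.
move=> hU hc hG hB.
have UU : U *m adj U = 1%:M := mulmx1C hU.
have hsc (k : C) (M : 'M[C]_2) : U *m (k%:M + M) *m adj U = k%:M + U *m M *m adj U.
  by rewrite mulmxDr mulmxDl mul_mx_scalar -scalemxAl UU scalemx1.
have hE : D - U *m D *m adj U = - (A - U *m A *m adj U).
  have h0 : (A - U *m A *m adj U) + (D - U *m D *m adj U) = 0.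
    rewrite addrACA -opprD -mulmxDl -mulmxDr -hc -mulmxA UU mulmx1.
    by rewrite subrr.
  by apply/eqP; rewrite -addr_eq0 addrC h0.
have hW : (A - U *m A *m adj U) + (A - U *m A *m adj U)
          = rc c *: (pauliZ R - U *m pauliZ R *m adj U).
  rewrite -{2}[A - _]opprK -hE zmod_rearr -mulmxBl -mulmxBr hG hsc.
  rewrite -scalemxAr -scalemxAl scalerBr opprD addrACA subrr add0r.
  by [].
have hB2 : B - U *m B *m adj U = let N := rc a *: pauliX R + rc gm *: ('i *: pauliY R) in
                                  N - U *m N *m adj U.
  by rewrite hB hsc /= opprD addrACA subrr add0r.
have hB3 : adj B - U *m adj B *m adj U = adj (B - U *m B *m adj U).
  by rewrite adjB !adj_mul adjK mulmxA.
have h4 := fs_dbl (A - U *m A *m adj U).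
rewrite hW fs_scale fsZW // in h4.
rewrite hB3 fs_adj hE fs_opp hB2 fsNW //.
move: h4; set x := fs _; set wz := wP (pauliZ R) U; set wx := wP (pauliX R) U.
set wy := wP (pauliY R) U; move: (c ^+ 2) (a ^+ 2) (gm ^+ 2) => c2 a2 g2 h4.
clearbody x wz wx wy. clear -h4.
nra.
Qed.
End S3.

Section S4.
Variable R : realType.
Local Notation C := (R[i]).
Definition i0 : 'I_3 := @Ordinal 3 0 isT.
Definition i1 : 'I_3 := @Ordinal 3 1 isT.
Definition i2 : 'I_3 := @Ordinal 3 2 isT.
Local Notation o := (ord0 : 'I_2).
Local Notation m := (ord_max : 'I_2).

Definition cb (A B B' D : 'M[C]_2) (i j : 'I_3) : R :=
  complex.Re (pauli R i o o * \tr (pauli R j *m A) + pauli R i o m * \tr (pauli R j *m B')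
   + pauli R i m o * \tr (pauli R j *m B) + pauli R i m m * \tr (pauli R j *m D)).

Lemma corr_cb rho i j : adj rho = rho ->
  corr rho i j = cb (blk rho o o) (blk rho o m) (adj (blk rho o m)) (blk rho m m) i j.
Proof.
move=> H; rewrite /corr mxE tr_tens /cb.
rewrite !big_ord_recl !big_ord0 !addr0 !lift00 -(blk_herm _ _ H) !addrA.
by [].
Qed.
End S4.
Section S5.
Variable R : realType.
Local Notation C := (R[i]).
Local Notation o := (ord0 : 'I_2).
Local Notation m := (ord_max : 'I_2).
Definition mk2 (p q r s : C) : 'M[C]_2 :=
  \matrix_(i, j) if i == o then (if j == o then p else q) else (if j == o then r else s).

Lemma mk2_eta (M : 'M[C]_2) : M = mk2 (M o o) (M o m) (M m o) (M m m).
Proof.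
apply/matrixP => i j; rewrite mxE.
by case: i => [[|[|i]] hi]; case: j => [[|[|j]] hj] //=; congr (M _ _); apply: val_inj.
Qed.

Lemma cpx_eq (x1 y1 x2 y2 : R) : x1 = x2 -> y1 = y2 -> (x1 +i* y1)%C = (x2 +i* y2)%C.
Proof. by move=> -> ->. Qed.

Lemma cpx_inj (x1 y1 x2 y2 : R) : (x1 +i* y1)%C = (x2 +i* y2)%C -> x1 = x2 /\ y1 = y2.
Proof. by case=> -> ->. Qed.

Lemma decomp (A B D : 'M[C]_2) :
  adj A = A -> adj D = D ->
  (forall i j : 'I_3, (i != j :> nat) -> cb A B (adj B) D i j = 0) ->
  exists (g b : C) (c a gm : R), [/\ A - D = g%:M + rc c *: pauliZ R,
     B = b%:M + (rc a *: pauliX R + rc gm *: ('i *: pauliY R)),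
     cb A B (adj B) D i0 i0 = 4 * a, cb A B (adj B) D i1 i1 = - (4 * gm)
     & cb A B (adj B) D i2 i2 = 2 * c].
Proof.
move=> hA hD H.
have h01 := H i0 i1 isT; have h02 := H i0 i2 isT.
have h10 := H i1 i0 isT; have h12 := H i1 i2 isT.
have h20 := H i2 i0 isT; have h21 := H i2 i1 isT.
clear H.
move: hA hD h01 h02 h10 h12 h20 h21; rewrite /cb.
rewrite (mk2_eta A) (mk2_eta B) (mk2_eta D).
move: (A o o) (A o m) (A m o) (A m m) (B o o) (B o m) (B m o) (B m m)
      (D o o) (D o m) (D m o) (D m m) => [a1 a2] [a3 a4] [a5 a6] [a7 a8]
      [b1 b2] [b3 b4] [b5 b6] [b7 b8] [d1 d2] [d3 d4] [d5 d6] [d7 d8].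
move=> /matrixP hA /matrixP hD.
move: (hA o o) (hA o m) (hA m o) (hA m m) (hD o o) (hD o m) (hD m o) (hD m m).
rewrite !mxE /=.
move=> /cpx_inj[ea1 ea2] /cpx_inj[ea3 ea4] /cpx_inj[ea5 ea6] /cpx_inj[ea7 ea8].
move=> /cpx_inj[ed1 ed2] /cpx_inj[ed3 ed4] /cpx_inj[ed5 ed6] /cpx_inj[ed7 ed8].
rewrite /mxtrace ?(mxE, big_ord_recl, big_ord0) /=.
move=> h01 h02 h10 h12 h20 h21.
exists ((((a1 - d1) + (a7 - d7)) / 2) +i* 0)%C, (b1 +i* b2)%C, (((a1 - d1) - (a7 - d7)) / 2),
  ((b3 + b5) / 2), ((b3 - b5) / 2).
split.
- apply/matrixP => i j; rewrite !mxE /rc.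
  case: i => [[|[|i]] hi] //; case: j => [[|[|j]] hj] //=; rewrite ?mulr1n ?mulr0n /=;
    apply: cpx_eq; lra.
- apply/matrixP => i j; rewrite !mxE /rc.
  case: i => [[|[|i]] hi] //; case: j => [[|[|j]] hj] //=; rewrite ?mulr1n ?mulr0n /=;
    apply: cpx_eq; lra.
- lra.
- lra.
- lra.
Qed.
End S5.

Section S6b.
Variable R : realType.
Local Notation C := (R[i]).
Local Notation o := (ord0 : 'I_2).
Local Notation m := (ord_max : 'I_2).
Lemma fs_split (rho : 'M[C]_(2 * 2)) U : fs (rho - rho_f rho U) =
  fs (blk rho o o - U *m blk rho o o *m adj U) + fs (blk rho o m - U *m blk rho o m *m adj U)
  + fs (blk rho m o - U *m blk rho m o *m adj U) + fs (blk rho m m - U *m blk rho m m *m adj U).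
Proof.
rewrite fs_blk !big_ord_recl !big_ord0 !addr0 !lift00 -!addrA. have e a b : fs (blk (rho - rho_f rho U) a b) = fs (blk rho a b - U *m blk rho a b *m adj U) by rewrite blkB blk_rho_f. by rewrite !e.

Qed.
End S6b.

Section S6.
Variable R : realType.
Local Notation C := (R[i]).
Local Notation o := (ord0 : 'I_2).
Local Notation m := (ord_max : 'I_2).

Lemma Wcoords (U : 'M[C]_2) : adj U *m U = 1%:M ->
  exists p1 p2 q1 q2 r1 r2 s1 s2 : R,
  [/\ p1 ^+ 2 + p2 ^+ 2 + r1 ^+ 2 + r2 ^+ 2 = 1, q1 ^+ 2 + q2 ^+ 2 + s1 ^+ 2 + s2 ^+ 2 = 1,
   U o m = (q1 +i* q2)%C, U m o = (r1 +i* r2)%C &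
   [/\ wP (pauliX R) U = 2 - 2 * (p1 * s1 + p2 * s2 + q1 * r1 + q2 * r2),
       wP (pauliY R) U = 2 - 2 * (p1 * s1 + p2 * s2 - q1 * r1 - q2 * r2) &
       wP (pauliZ R) U = 2 - (p1 ^+ 2 + p2 ^+ 2 + s1 ^+ 2 + s2 ^+ 2 - q1 ^+ 2 - q2 ^+ 2 - r1 ^+ 2 - r2 ^+ 2)]].
Proof.
move/matrixP=> hU; move: (hU o o) (hU m m).
rewrite /wP /mxtrace ?(mxE, big_ord_recl, big_ord0) /=.
rewrite -!lift00.
move: (U o o) (U o (lift o (ord0 : 'I_1))) (U (lift o (ord0 : 'I_1)) o)
      (U (lift o (ord0 : 'I_1)) (lift o (ord0 : 'I_1)))
  => [p1 p2] [q1 q2] [r1 r2] [s1 s2] /= /cpx_inj[e1 _] /cpx_inj[e2 _].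
exists p1, p2, q1, q2, r1, r2, s1, s2; split => //.
- by rewrite -e1; ring.
- by rewrite -e2; ring.
- by split; ring.
Qed.

Lemma Wbounds (U : 'M[C]_2) : adj U *m U = 1%:M ->
  [/\ 0 <= wP (pauliX R) U <= 4, 0 <= wP (pauliY R) U <= 4,
      0 <= wP (pauliZ R) U <= 4 &
      wP (pauliX R) U + wP (pauliY R) U + wP (pauliZ R) U <= 8].
Proof.
move=> /Wcoords [p1 [p2 [q1 [q2 [r1 [r2 [s1 [s2 [e1 e2 _ _ [-> -> ->]]]]]]]]]].
have := sqr_ge0 (p1 - s1); have := sqr_ge0 (p2 - s2); have := sqr_ge0 (p1 + s1);
have := sqr_ge0 (p2 + s2); have := sqr_ge0 (q1 - r1); have := sqr_ge0 (q2 - r2);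
have := sqr_ge0 (q1 + r1); have := sqr_ge0 (q2 + r2); have := sqr_ge0 q1;
have := sqr_ge0 q2; have := sqr_ge0 r1; have := sqr_ge0 r2; have := sqr_ge0 p1;
have := sqr_ge0 p2; have := sqr_ge0 s1; have := sqr_ge0 s2.
move=> *; split. apply/andP; split. lra. lra.  apply/andP; split. lra. lra.  apply/andP; split. lra. lra. lra.
Qed.

Lemma WZ0 (U : 'M[C]_2) : adj U *m U = 1%:M -> U o m = 0 -> U m o = 0 ->
  wP (pauliZ R) U = 0.
Proof.
move=> /Wcoords [p1 [p2 [q1 [q2 [r1 [r2 [s1 [s2 [e1 e2 -> -> [_ _ ->]]]]]]]]]].
move=> /cpx_inj[hq1 hq2] /cpx_inj[hr1 hr2]; rewrite hq1 hq2 hr1 hr2 in e1 e2 *; lra.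
Qed.

Lemma lp (d1 d2 d3 w1 w2 w3 mm : R) :
  0 <= w1 <= 4 -> 0 <= w2 <= 4 -> 0 <= w3 <= 4 -> w1 + w2 + w3 <= 8 ->
  mm <= d1 -> mm <= d2 -> mm <= d3 -> 0 <= mm ->
  d1 * w1 + d2 * w2 + d3 * w3 <= 4 * (d1 + d2 + d3 - mm).
Proof.
move=> /andP[? ?] /andP[? ?] /andP[? ?] ? ? ? ? ?.
have : 0 <= (d1 - mm) * (4 - w1) by apply: mulr_ge0; lra.
have : 0 <= (d2 - mm) * (4 - w2) by apply: mulr_ge0; lra.
have : 0 <= (d3 - mm) * (4 - w3) by apply: mulr_ge0; lra.
have : 0 <= mm * (8 - (w1 + w2 + w3)) by apply: mulr_ge0; lra.
move=> *; lra.
Qed.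

Lemma fs_state rho U : is_state rho -> is_diag_mx (corr rho) -> cyclic rho U ->
  4 * fs (rho - rho_f rho U) =
  corr rho i0 i0 ^+ 2 * wP (pauliX R) U + corr rho i1 i1 ^+ 2 * wP (pauliY R) U
  + corr rho i2 i2 ^+ 2 * wP (pauliZ R) U.
Proof.
case=> hH _ _ hD [hU hc].
have hdiag : forall i j : 'I_3, (i != j :> nat) -> corr rho i j = 0.
  by move=> i j hij; move/forallP: hD => /(_ i)/forallP/(_ j)/implyP/(_ hij)/eqP.
have hA : adj (blk rho o o) = blk rho o o by rewrite -(blk_herm o o hH).
have hDD : adj (blk rho m m) = blk rho m m by rewrite -(blk_herm m m hH).
have hcb : forall i j : 'I_3, (i != j :> nat) ->
    cb (blk rho o o) (blk rho o m) (adj (blk rho o m)) (blk rho m m) i j = 0.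
  by move=> i j hij; rewrite -corr_cb // hdiag.
have [g [b [c [a [gm [hG hB e0 e1 e2]]]]]] := decomp hA hDD hcb.
rewrite !corr_cb // e0 e1 e2.
rewrite ptraceA_blk in hc.
have := core hU hc hG hB.
rewrite fs_split (blk_herm o m hH) => ->.
ring.
Qed.
End S6.

Section S7.
Local Open Scope classical_set_scope.
Variable R : realType.
Local Notation C := (R[i]).

Lemma Mval_spec (rho : 'M[C]_(2 * 2)) : is_diag_mx (corr rho) ->
  exists mm, [/\ Mval rho = corr rho i0 i0 ^+ 2 + corr rho i1 i1 ^+ 2 + corr rho i2 i2 ^+ 2 - mm,
    mm <= corr rho i0 i0 ^+ 2, mm <= corr rho i1 i1 ^+ 2, mm <= corr rho i2 i2 ^+ 2 & 0 <= mm].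
Proof.
move=> /diag_mxP [d hT].
have l1 : lift ord0 ord0 = i1 :> 'I_3 by apply: val_inj.
have l2 : lift ord0 (lift ord0 ord0) = i2 :> 'I_3 by apply: val_inj.
have l0 : ord0 = i0 :> 'I_3 by apply: val_inj.
have dk : forall k, corr rho k k = d 0 k by move=> k; rewrite hT mxE eqxx mulr1n.
rewrite !dk.
set e0 := d 0 i0 ^+ 2; set e1 := d 0 i1 ^+ 2; set e2 := d 0 i2 ^+ 2.
have hcp : char_poly ((corr rho)^T *m corr rho) = \prod_(x <- [:: e0; e1; e2]) ('X - x%:P).
  rewrite hT tr_diag_mx mulmx_diag char_poly_trig ?diag_mx_is_trig //.
  rewrite !big_ord_recl big_ord0 !big_cons big_nil !mxE !eqxx !mulr1n.
  congr (('X - _%:P) * (('X - _%:P) * (('X - _%:P) * 1)));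
    rewrite ?/e0 ?/e1 ?/e2 expr2; congr (d 0 _ * d 0 _); exact: val_inj.
have ev : forall s, char_poly ((corr rho)^T *m corr rho) = \prod_(x <- s) ('X - x%:P) ->
    forall t, \prod_(x <- s) (t - x) = (t - e0) * ((t - e1) * ((t - e2) * 1)).
  move=> s hs t; have := congr1 (fun p => p.[t]) hs; rewrite hcp /= !horner_prod.
  rewrite !big_cons big_nil !hornerXsubC => ->.
  by apply: eq_bigr => x _; rewrite hornerXsubC.
pose S := [:: e0; e1; e2].
have hex : exists m, [set m | exists s, sorted_spectrum ((corr rho)^T *m corr rho) s
                            /\ m = s`_0 + s`_1] m.
  exists ((sort >=%R S)`_0 + (sort >=%R S)`_1); exists (sort >=%R S); split => //.
  split; first by rewrite size_sort.
    by apply: sort_sorted => a b; exact: le_total.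
  rewrite hcp; apply: perm_big.
  have := perm_sort >=%R S; move/(_ S); rewrite perm_refl perm_sym; exact.
rewrite /Mval; have [s [[hsz hso hsp] ->]] := xgetPex 0 hex.
move: hsz hso hsp; case: s => [|x [|y [|z [|? ?]]]] //= _.
move=> /and3P [hxy hyz _] hsp.
have E := ev _ hsp.
have Ez := E z; have E0 := E 0; have E1 := E 1; have Em := E (-1).
have Ee0 := E e0; have Ee1 := E e1; have Ee2 := E e2.
rewrite !big_cons !big_nil in Ez E0 E1 Em Ee0 Ee1 Ee2.
have key : (1 - x) * ((1 - y) * ((1 - z) * 1)) - (1 - e0) * ((1 - e1) * ((1 - e2) * 1))
  + ((-1 - x) * ((-1 - y) * ((-1 - z) * 1)) - (-1 - e0) * ((-1 - e1) * ((-1 - e2) * 1)))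
  - 2 * ((0 - x) * ((0 - y) * ((0 - z) * 1)) - (0 - e0) * ((0 - e1) * ((0 - e2) * 1)))
  = -2 * (x + y + z - (e0 + e1 + e2)) by ring.
rewrite E1 Em E0 !subrr in key.
have hsum : x + y + z = e0 + e1 + e2 by lra.
have ge0e : 0 <= e0 /\ 0 <= e1 /\ 0 <= e2 by rewrite /e0 /e1 /e2 !sqr_ge0.
have hzroot : z = e0 \/ z = e1 \/ z = e2.
  move: Ez; rewrite subrr !(mul0r, mulr0) mulr1 => /esym/eqP; rewrite !mulf_eq0 !subr_eq0.
  by case/or3P => /eqP ->; auto.
have hroot (e : R) : (e - x) * ((e - y) * ((e - z) * 1)) = 0 -> z <= e.
  rewrite mulr1 => /eqP; rewrite !mulf_eq0 !subr_eq0.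
  by case/or3P => /eqP ->; lra.
exists z; split.
- lra.
- by apply: hroot; rewrite Ee0 subrr !(mul0r, mulr0).
- by apply: hroot; rewrite Ee1 subrr !(mul0r, mulr0).
- by apply: hroot; rewrite Ee2 subrr !(mul0r, mulr0).
- by case: hzroot => [->|[->|->]]; lra.
Qed.
End S7.

Section S8.
Variable R : realType.
Local Notation C := (R[i]).
Local Notation o := (ord0 : 'I_2).
Local Notation m := (ord_max : 'I_2).

Definition r0 (i j : nat) : C :=
  match i, j with
  | 0, 0 => rc (3 / 4) | 3, 3 => rc (1 / 4) | 0, 3 => rc (1 / 4) | 3, 0 => rc (1 / 4)
  | _, _ => 0 end.
Definition rho0 : 'M[C]_(2 * 2) := \matrix_(i, j) r0 i j.


Lemma dist_le (rho : 'M[C]_(2 * 2)) (U : 'M[C]_2) : fs (rho - rho_f rho U) <= 1 -> dist rho U <= (Num.sqrt 2)^-1.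
Proof.
move=> h; rewrite /dist frobE; apply: ler_piMr; first by rewrite invr_ge0 sqrtr_ge0.
by rewrite -sqrtr1 ler_sqrt.
Qed.

Lemma dmax_le (rho : 'M[C]_(2 * 2)) : (forall U : 'M[C]_2, cyclic rho U -> fs (rho - rho_f rho U) <= 1) ->
  dmax rho <= (Num.sqrt 2)^-1.
Proof.
move=> h; apply: ge_sup.
  exists (dist rho 1%:M); exists 1%:M => //; split.
    by rewrite /unitary adj1 mulmx1.
  by rewrite mulmx1 mul1mx.
by move=> _ [U hU <-]; apply: dist_le; apply: h.
Qed.

Lemma rho0_herm : adj rho0 = rho0.
Proof.
apply/matrixP => i j; rewrite !mxE.
case: i => [[|[|[|[|i]]]] hi] //; case: j => [[|[|[|[|j]]]] hj] //=; rewrite /rc /=.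
all: by [rewrite rmorph0 | exact: conjc_real].
Qed.

Lemma rho0_tr : \tr rho0 = 1.
Proof.
rewrite /mxtrace ?(mxE, big_ord_recl, big_ord0) /= /rc.
apply/eqP; rewrite eq_complex /=.
by apply/andP; split; apply/eqP; lra.
Qed.

Lemma rho0_psd (v : 'cV[C]_(2 * 2)) : 0 <= (adj v *m rho0 *m v) 0 0.
Proof.
rewrite ?(mxE, big_ord_recl, big_ord0) /= /rc.
set a := v _ _; set b := v _ _; set c := v _ _; set d := v _ _.
clearbody a b c d; case: a => a1 a2; case: b => b1 b2; case: c => c1 c2; case: d => d1 d2.
rewrite lecE /=; apply/andP; split; first by apply/eqP; ring.
have := sqr_ge0 (a1 + d1); have := sqr_ge0 (a2 + d2); have := sqr_ge0 a1; have := sqr_ge0 a2.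
move=> *; lra.
Qed.

Lemma conjR (x : R) : ((x +i* 0)%C)^* = (x +i* 0)%C :> C.
Proof. exact: conjc_real. Qed.

Lemma rho0_corr (i j : 'I_3) : corr rho0 i j =
  if i == j then (if val i == 0%N then 1 / 2 else if val i == 1%N then - (1 / 2) else 1) else 0.
Proof.
rewrite corr_cb ?rho0_herm // /cb.
case: i => [[|[|[|i]]] hi] //; case: j => [[|[|[|j]]] hj] //=;
  rewrite /mxtrace ?(mxE, big_ord_recl, big_ord0) /= /rc ?conjR ?rmorph0 /=; lra.
Qed.

Lemma cyc0 (U : 'M[C]_2) : cyclic rho0 U -> U o m = 0 /\ U m o = 0.
Proof.
case=> _ /matrixP hc; move: (hc o m) (hc m o).
rewrite -!lift00 ?(mxE, big_ord_recl, big_ord0) /= /rc.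
set a := U _ _; set b := U _ _; set c := U _ _; set d := U _ _.
clearbody a b c d; case: a => a1 a2; case: b => b1 b2; case: c => c1 c2; case: d => d1 d2.
move=> /cpx_inj[e1 e2] /cpx_inj[e3 e4].
by split; apply: cpx_eq; lra.
Qed.

End S8.

Theorem theorem3 (R : realType) :
  (forall rho : 'M[R[i]]_(2 * 2),
      is_state rho -> is_diag_mx (corr rho) ->
      (Num.sqrt 2)^-1 < dmax rho -> 1 < Mval rho)
  /\
  (exists rho : 'M[R[i]]_(2 * 2),
      [/\ is_state rho, is_diag_mx (corr rho), 1 < Mval rho
        & dmax rho <= (Num.sqrt 2)^-1]).
Proof.
split.
- move=> rho hs hd hgt.
  have [mm [hM h0 h1 h2 hm]] := Mval_spec hd.
  rewrite hM ltNge; apply/negP => hle.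
  move: hgt; rewrite ltNge => /negP; apply.
  apply: dmax_le => U hU.
  have e := fs_state hs hd hU.
  have [wx wy wz ws] := Wbounds hU.1.
  have := lp wx wy wz ws h0 h1 h2 hm.
  rewrite -e => hlp; lra.
- have hs0 : is_state (rho0 R).
    by split; [exact: rho0_herm | exact: rho0_psd | exact: rho0_tr].
  have hd0 : is_diag_mx (corr (rho0 R)).
    apply/forallP => i; apply/forallP => j; apply/implyP => hij.
    by rewrite rho0_corr; have -> : (i == j) = false by apply/negbTE.
  exists (rho0 R); split => //.
    have [mm [hM h0 h1 h2 hm]] := Mval_spec hd0.
    rewrite hM; rewrite !rho0_corr /= in h0 h1 h2 *; lra.
  apply: dmax_le => U hU.
  have e := fs_state hs0 hd0 hU; rewrite !rho0_corr /= in e.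
  have [hq hr] := cyc0 hU.
  have wz := WZ0 hU.1 hq hr.
  have [wx wy _ ws] := Wbounds hU.1.
  move/andP: wx => [? ?]; move/andP: wy => [? ?].
  lra.
Qed.
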